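(* Fix $\delta\in[0,1)$ and $V_{\sf P}\ge0$. Then $$\lim_{p\to0}g(\delta,\rho_1,c)=1,\qquad \lim_{p\to0}g(\delta,\rho_2,c)=\frac{1-\delta}{1-\delta\rho_2},$$ where $\rho_1$ and $c$ depend on $p$ as defined below and $\rho_2$ does not depend on $p$.
   Context: For $p\in(0,1)$ and $V_{\sf P}\ge0$ define $\rho_1=\frac{e^{(1-p)/p}}{1+e^{V_{\sf P}}+e^{(1-p)/p}}$, $\rho_2=\frac{e^{-1}}{1+e^{V_{\sf P}}+e^{-1}}$, and $c=\frac{\ln((1-\rho_2)/(1-\rho_1))}{\ln(\rho_1/\rho_2)+\ln((1-\rho_2)/(1-\rho_1))}$. For $\rho,x\in[0,1]$, let $X_1(\rho,x),X_2(\rho,x),\dots$ be i.i.d. random variables with $X_k=1-x$ with probability $\rho$ and $X_k=-x$ with probability $1-\rho$; let $S_n(\rho,x)=\sum_{k=1}^nX_k(\rho,x)$ and $N(\rho,x)=\inf\{n\ge1:S_n(\rho,x)<0\}$. Define $g(\delta,\rho,x)=\mathbb E\left[1-\delta^{N(\rho,x)}\right]$ (with the convention $\delta^{\infty}=0$). *)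

(* Defs.v *)
From Stdlib Require Import Reals Lra List.
From Coquelicot Require Import Coquelicot.
Import ListNotations.
Open Scope R_scope.

Definition rho1 (p VP : R) : R :=
  exp ((1 - p) / p) / (1 + exp VP + exp ((1 - p) / p)).
Definition rho2 (VP : R) : R := exp (-1) / (1 + exp VP + exp (-1)).
Definition cpar (p VP : R) : R :=
  ln ((1 - rho2 VP) / (1 - rho1 p VP)) /
  (ln (rho1 p VP / rho2 VP) + ln ((1 - rho2 VP) / (1 - rho1 p VP))).

(* The random walk: outcomes of the first n i.i.d. steps are encoded by
   a list of booleans (true = step 1-x, prob rho; false = step -x, prob 1-rho). *)
Fixpoint bseqs (n : nat) : list (list bool) :=
  match n with
  | O => [nil]
  | S m => map (cons true) (bseqs m) ++ map (cons false) (bseqs m)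
  end.

Definition step (x : R) (b : bool) : R := if b then 1 - x else - x.

Definition psum (x : R) (l : list bool) (m : nat) : R :=
  fold_right Rplus 0 (map (step x) (firstn m l)).

Definition weight (rho : R) (l : list bool) : R :=
  fold_right Rmult 1 (map (fun b : bool => if b then rho else 1 - rho) l).

Definition isneg (a : R) : bool := if Rlt_dec a 0 then true else false.

Definition firstneg (x : R) (l : list bool) (n : nat) : bool :=
  isneg (psum x l n) &&
  forallb (fun m => negb (isneg (psum x l m))) (seq 1 (Nat.pred n)).

Definition probN (rho x : R) (n : nat) : R :=
  fold_right Rplus 0
    (map (fun l => if firstneg x l n then weight rho l else 0) (bseqs n)).

(* g(delta,rho,x) = E[1 - delta^N] with delta^infinity = 0, i.e.
   1 - sum_{n>=1} delta^n P(N = n)  (the n = 0 term is 0 since N >= 1). *)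
Definition gfun (delta rho x : R) : R :=
  1 - Series (fun n => delta ^ n * probN rho x n).

(* Main.v *)
Require Import Defs.
From Stdlib Require Import Reals Lra Lia List Arith.
From Coquelicot Require Import Coquelicot.
Import ListNotations.
Open Scope R_scope.

Definition Ssum (n : nat) (F : list bool -> R) : R := fold_right Rplus 0 (map F (bseqs n)).

Lemma fr_app (a b : list R) : fold_right Rplus 0 (a ++ b) = fold_right Rplus 0 a + fold_right Rplus 0 b.
Proof. induction a; simpl; [lra|rewrite IHa; lra]. Qed.

Lemma Ssum_S n F : Ssum (S n) F = Ssum n (fun l => F (true :: l)) + Ssum n (fun l => F (false :: l)).
Proof. unfold Ssum; simpl. rewrite map_app, !map_map, fr_app. reflexivity. Qed.

Lemma fr_le (L : list (list bool)) F G : (forall l, F l <= G l) ->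
  fold_right Rplus 0 (map F L) <= fold_right Rplus 0 (map G L).
Proof. intros H; induction L; simpl; [lra|]. specialize (H a). lra. Qed.

Lemma Ssum_le n F G : (forall l, F l <= G l) -> Ssum n F <= Ssum n G.
Proof. intros; apply fr_le; auto. Qed.

Lemma Ssum_ext n F G : (forall l, F l = G l) -> Ssum n F = Ssum n G.
Proof. intros H; unfold Ssum; f_equal; apply map_ext; auto. Qed.

Lemma Ssum_scal n k F : Ssum n (fun l => k * F l) = k * Ssum n F.
Proof. unfold Ssum. induction (bseqs n) as [|a L IH]; simpl; [ring|rewrite IH; ring]. Qed.

Lemma Ssum_0 n : Ssum n (fun _ => 0) = 0.
Proof. unfold Ssum. induction (bseqs n) as [|a L IH]; simpl; [ring|rewrite IH; ring]. Qed.

Lemma Ssum_weight rho n : Ssum n (weight rho) = 1.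
Proof.
  induction n. { unfold Ssum, weight; simpl. lra. }
  rewrite Ssum_S.
  rewrite (Ssum_ext n _ (fun l => rho * weight rho l)) by reflexivity.
  rewrite (Ssum_ext n (fun l => weight rho (false :: l)) (fun l => (1-rho) * weight rho l)) by reflexivity.
  rewrite !Ssum_scal, IHn. ring.
Qed.

Lemma weight_nonneg rho l : 0 <= rho <= 1 -> 0 <= weight rho l.
Proof. intros H; induction l as [|b l IH]; [unfold weight; simpl; lra|].
  change (weight rho (b::l)) with ((if b then rho else 1-rho) * weight rho l). destruct b; nra. Qed.

Lemma Ssum_bound rho n F k : (forall l, 0 <= F l <= k * weight rho l) -> Ssum n F <= k.
Proof.
  intros H. eapply Rle_trans. apply (Ssum_le n F (fun l => k * weight rho l)).
  intros l; apply H. rewrite Ssum_scal, Ssum_weight. lra.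
Qed.

Lemma Ssum_nonneg n F : (forall l, 0 <= F l) -> 0 <= Ssum n F.
Proof. intros H. rewrite <- (Ssum_0 n). apply Ssum_le; auto. Qed.

Lemma Ssum_bound_T rho (hr : 0 <= rho <= 1) n : forall F k,
  (forall l, 0 <= F l <= k * weight rho l) -> F (repeat true n) = 0 ->
  Ssum n F <= k * (1 - rho ^ n).
Proof.
  induction n; intros F k H H0.
  - unfold Ssum; simpl in *. rewrite H0. nra.
  - rewrite Ssum_S.
    assert (A := IHn (fun l => F (true :: l)) (k * rho)).
    assert (B := Ssum_bound rho n (fun l => F (false :: l)) (k * (1 - rho))).
    simpl.
    assert (A' : Ssum n (fun l => F (true :: l)) <= k * rho * (1 - rho ^ n)).
    { apply A; [|exact H0]. intros l. specialize (H (true :: l)). change (weight rho (true::l)) with (rho * weight rho l) in H. lra. }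
    assert (B' : Ssum n (fun l => F (false :: l)) <= k * (1 - rho)).
    { apply B. intros l. specialize (H (false :: l)). change (weight rho (false::l)) with ((1-rho) * weight rho l) in H. lra. }
    lra.
Qed.

Lemma probN_Ssum rho x n : probN rho x n = Ssum n (fun l => if firstneg x l n then weight rho l else 0).
Proof. reflexivity. Qed.

Lemma psum_cons x b l k : psum x (b :: l) (S k) = step x b + psum x l k.
Proof. reflexivity. Qed.

Lemma psum_0 x l : psum x l 0 = 0.
Proof. reflexivity. Qed.

Lemma psum_repeat x n : psum x (repeat true n) n = INR n * (1 - x).
Proof.
  induction n. { rewrite psum_0; simpl; ring. }
  simpl repeat. rewrite psum_cons, IHn, S_INR. simpl. ring.
Qed.

Lemma isneg_false a : 0 <= a -> isneg a = false.
Proof. intros; unfold isneg; destruct (Rlt_dec a 0); [lra|auto]. Qed.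
Lemma isneg_true a : a < 0 -> isneg a = true.
Proof. intros; unfold isneg; destruct (Rlt_dec a 0); [auto|lra]. Qed.

Lemma probN_le rho x n : 0 <= rho <= 1 -> x <= 1 -> probN rho x n <= 1 - rho ^ n.
Proof.
  intros hr hx. rewrite probN_Ssum.
  replace (1 - rho ^ n) with (1 * (1 - rho ^ n)) by ring.
  apply Ssum_bound_T; auto.
  - intros l. destruct (firstneg x l n); pose proof (weight_nonneg rho l hr); lra.
  - unfold firstneg. rewrite psum_repeat, isneg_false; auto.
    pose proof (pos_INR n). nra.
Qed.

Lemma probN_nonneg rho x n : 0 <= rho <= 1 -> 0 <= probN rho x n.
Proof.
  intros hr. rewrite probN_Ssum. apply Ssum_nonneg. intros l.
  destruct (firstneg x l n); [apply weight_nonneg; auto|lra].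
Qed.

Lemma probN_le1 rho x n : 0 <= rho <= 1 -> probN rho x n <= 1.
Proof.
  intros hr. rewrite probN_Ssum. apply (Ssum_bound rho). intros l.
  pose proof (weight_nonneg rho l hr). destruct (firstneg x l n); lra.
Qed.

Definition ok (x s : R) (l : list bool) (n : nat) : bool :=
  isneg (s + psum x l n) &&
  forallb (fun m => negb (isneg (s + psum x l m))) (seq 1 (Nat.pred n)).

Lemma forallb_ext' {A} (f g : A -> bool) L : (forall a, f a = g a) -> forallb f L = forallb g L.
Proof. intros H; induction L; simpl; [auto|rewrite H, IHL; auto]. Qed.

Lemma forallb_mapS (f : nat -> bool) L : forallb f (map S L) = forallb (fun k => f (S k)) L.
Proof. induction L; simpl; [auto|rewrite IHL; auto]. Qed.

Lemma firstneg_ok x l n : firstneg x l n = ok x 0 l n.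
Proof.
  unfold firstneg, ok. rewrite Rplus_0_l. f_equal.
  apply forallb_ext'. intros a. rewrite Rplus_0_l. auto.
Qed.

Lemma ok_true0 x s l : 0 <= s -> x <= 1 -> ok x s (true :: l) 1 = false.
Proof.
  intros. unfold ok. rewrite psum_cons, psum_0. simpl step.
  rewrite isneg_false; [auto|lra].
Qed.

Lemma ok_false0 x s l : s < x -> ok x s (false :: l) 1 = true.
Proof.
  intros. unfold ok. rewrite psum_cons, psum_0. simpl step.
  rewrite isneg_true; [auto|lra].
Qed.

Lemma ok_falseS x s l m : s < x -> ok x s (false :: l) (S (S m)) = false.
Proof.
  intros. unfold ok. simpl Nat.pred. simpl seq. simpl forallb.
  rewrite (psum_cons x false l 0), psum_0. simpl step.
  rewrite (isneg_true (s + (- x + 0))); [|lra]. simpl.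
  destruct (isneg _); reflexivity.
Qed.

Lemma ok_trueS x s l m : 0 <= s -> x <= 1 -> ok x s (true :: l) (S (S m)) = ok x (s + (1 - x)) l (S m).
Proof.
  intros. unfold ok. simpl Nat.pred. simpl seq. simpl forallb.
  rewrite (psum_cons x true l 0), psum_0. simpl step.
  rewrite (isneg_false (s + (1 - x + 0))); [|lra]. simpl negb.
  rewrite psum_cons. simpl step. rewrite Rplus_assoc. f_equal.
  simpl andb. rewrite <- seq_shift, forallb_mapS.
  apply forallb_ext'. intros a. rewrite psum_cons. simpl step. rewrite Rplus_assoc. auto.
Qed.

Lemma Qval rho x (hx : x <= 1) n : forall s, 0 <= s -> s + INR n * (1 - x) < x ->
  Ssum (S n) (fun l => if ok x s l (S n) then weight rho l else 0) = rho ^ n * (1 - rho).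
Proof.
  induction n; intros s hs hlt.
  - rewrite Ssum_S. simpl in hlt.
    rewrite (Ssum_ext 0 _ (fun _ => 0)); [|intros l; rewrite ok_true0; auto].
    rewrite (Ssum_ext 0 (fun l => if ok x s (false :: l) 1 then weight rho (false :: l) else 0) (fun l => (1 - rho) * weight rho l)); [|intros l; rewrite ok_false0; [reflexivity|lra]].
    rewrite Ssum_0, Ssum_scal, Ssum_weight. simpl. ring.
  - rewrite Ssum_S. rewrite S_INR in hlt. pose proof (pos_INR n).
    rewrite (Ssum_ext (S n) _ (fun l => rho * (if ok x (s + (1 - x)) l (S n) then weight rho l else 0))).
    2:{ intros l. rewrite ok_trueS; auto. change (weight rho (true :: l)) with (rho * weight rho l). destruct (ok x (s + (1 - x)) l (S n)); ring. }
    rewrite (Ssum_ext (S n) (fun l => if ok x s (false :: l) (S (S n)) then weight rho (false :: l) else 0) (fun _ => 0)).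
    2:{ intros l. rewrite ok_falseS; auto. nra. }
    rewrite Ssum_0, Ssum_scal, IHn; [simpl; ring|lra|lra].
Qed.

Lemma probN_S rho x n : x <= 1 -> INR n * (1 - x) < x -> probN rho x (S n) = rho ^ n * (1 - rho).
Proof.
  intros. rewrite probN_Ssum.
  rewrite (Ssum_ext _ _ (fun l => if ok x 0 l (S n) then weight rho l else 0)).
  2:{ intros l; rewrite firstneg_ok; auto. }
  apply Qval; auto; lra.
Qed.

Lemma probN_0 rho x : probN rho x 0 = 0.
Proof. unfold probN. simpl. unfold firstneg. rewrite psum_0, isneg_false; [simpl; ring|lra]. Qed.

Lemma div_lt1 a D : 0 < a -> a < D -> a / D < 1.
Proof. intros. unfold Rdiv. apply Rmult_lt_reg_r with D; [lra|].
  rewrite Rmult_assoc, Rinv_l, Rmult_1_r; lra. Qed.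

Lemma rho2_bounds VP : 0 < rho2 VP < 1.
Proof. unfold rho2. pose proof (exp_pos VP). pose proof (exp_pos (-1)).
  split; [apply Rdiv_lt_0_compat; lra| apply div_lt1; lra]. Qed.

Lemma rho1_bounds p VP : 0 < p -> 0 < rho1 p VP < 1 /\ 1 - rho1 p VP <= (1 + exp VP) * p.
Proof.
  intros hp. unfold rho1. set (E := exp ((1 - p) / p)). set (K := 1 + exp VP).
  assert (hE : 0 < E) by apply exp_pos. assert (hK : 0 < K) by (unfold K; pose proof (exp_pos VP); lra).
  assert (hE1 : / p <= E).
  { unfold E. replace (/ p) with (1 + (1 - p) / p) by (field; lra). apply exp_ineq1_le. }
  replace (1 + exp VP + E) with (K + E) by (unfold K; ring).
  split. split; [apply Rdiv_lt_0_compat; lra| apply div_lt1; lra].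
  replace (1 - E / (K + E)) with (K * / (K + E)) by (field; lra).
  apply Rmult_le_compat_l; [lra|].
  apply Rle_trans with (/ / p).
  apply Rinv_le_contravar; [apply Rinv_0_lt_compat; lra| lra].
  right; field; lra.
Qed.

Lemma cpar_facts p VP (M : nat) : 0 < p ->
  (1 + exp VP) * p < (1 - rho2 VP) * exp (- (INR M * ln (/ rho2 VP))) ->
  let u := ln (rho1 p VP / rho2 VP) in
  let v := ln ((1 - rho2 VP) / (1 - rho1 p VP)) in
  cpar p VP = v / (u + v) /\ 0 < u /\ u <= ln (/ rho2 VP) /\ INR M * ln (/ rho2 VP) < v.
Proof.
  intros hp hlt u v.
  destruct (rho1_bounds p VP hp) as [[h1 h1'] hb].
  destruct (rho2_bounds VP) as [h2 h2'].
  set (A := ln (/ rho2 VP)) in *.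
  assert (hA : 0 < A). { unfold A. rewrite <- ln_1. apply ln_increasing; [lra|].
    rewrite <- Rinv_1. apply Rinv_lt_contravar; lra. }
  assert (hMA : 0 <= INR M * A) by (pose proof (pos_INR M); nra).
  assert (he : exp (- (INR M * A)) <= 1).
  { rewrite <- exp_0. destruct (Req_dec (INR M * A) 0) as [e|e]. rewrite e, Ropp_0; lra.
    left. apply exp_increasing. lra. }
  assert (hlt2 : 1 - rho1 p VP < (1 - rho2 VP) * exp (- (INR M * A))) by lra.
  assert (hr : rho2 VP < rho1 p VP).
  { assert ((1 - rho2 VP) * exp (- (INR M * A)) <= 1 - rho2 VP) by nra. lra. }
  split; [reflexivity|]. split.
  { unfold u. rewrite <- ln_1. apply ln_increasing; [lra|].
    apply Rmult_lt_reg_r with (rho2 VP); [lra|]. unfold Rdiv.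
    rewrite Rmult_assoc, Rinv_l, Rmult_1_r; lra. }
  split.
  { unfold u, A. apply ln_le. apply Rdiv_lt_0_compat; lra.
    unfold Rdiv. rewrite <- (Rmult_1_l (/ rho2 VP)) at 2.
    apply Rmult_le_compat_r; [left; apply Rinv_0_lt_compat; lra| lra]. }
  unfold v. replace (INR M * A) with (ln (exp (INR M * A))) by apply ln_exp.
  apply ln_increasing; [apply exp_pos|].
  assert (hpos : 0 < 1 - rho1 p VP) by lra.
  apply Rmult_lt_reg_r with (1 - rho1 p VP); [lra|].
  unfold Rdiv. rewrite Rmult_assoc, Rinv_l, Rmult_1_r by lra.
  apply Rmult_lt_reg_r with (exp (- (INR M * A))); [apply exp_pos|].
  replace (exp (INR M * A) * (1 - rho1 p VP) * exp (- (INR M * A))) with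
    ((1 - rho1 p VP) * (exp (INR M * A) * exp (- (INR M * A)))) by ring.
  rewrite <- exp_plus, Rplus_opp_r, exp_0, Rmult_1_r. lra.
Qed.

Lemma pow01 r k : 0 <= r <= 1 -> 0 <= r ^ k <= 1.
Proof. intros H; induction k; simpl; nra. Qed.

Lemma pow_dec r M n : 0 <= r <= 1 -> (M <= n)%nat -> r ^ n <= r ^ M.
Proof.
  intros H hMn. induction hMn; [lra|]. simpl. pose proof (pow01 r m H). nra.
Qed.

Lemma Series_nonneg a : (forall n, 0 <= a n) -> ex_series a -> 0 <= Series a.
Proof.
  intros H He. assert (E : Series (fun n => 0 * a n) = 0) by (rewrite Series_scal_l; ring).
  rewrite <- E. apply Series_le; [|exact He]. intros n; specialize (H n); lra.
Qed.

Lemma ex_series_dom a delta : 0 <= delta < 1 -> (forall n, Rabs (a n) <= delta ^ n) -> ex_series a.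
Proof.
  intros hd H. apply (ex_series_le a (fun n => delta ^ n)); [exact H|].
  apply ex_series_geom. rewrite Rabs_pos_eq; lra.
Qed.

Lemma geom_val q : 0 <= q < 1 -> Series (fun n => q ^ n) = / (1 - q).
Proof. intros. apply is_series_unique, is_series_geom. rewrite Rabs_pos_eq; lra. Qed.

Lemma part1_core delta r x : 0 <= delta < 1 -> 0 <= r <= 1 -> x <= 1 ->
  Rabs (gfun delta r x - 1) <= (1 - r) / (1 - delta) ^ 2.
Proof.
  intros hd hr hx.
  set (a := fun n => delta ^ n * probN r x n).
  assert (ha : forall n, 0 <= a n <= delta ^ n - (delta * r) ^ n).
  { intros n. unfold a. rewrite Rpow_mult_distr. pose proof (probN_le r x n hr hx).
    pose proof (probN_nonneg r x n hr). pose proof (pow01 delta n (conj (proj1 hd) (Rlt_le _ _ (proj2 hd)))).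
    nra. }
  assert (hgeo1 : is_series (fun n => delta ^ n) (/ (1 - delta))).
  { apply is_series_geom. rewrite Rabs_pos_eq; lra. }
  assert (hgeo2 : is_series (fun n => (delta * r) ^ n) (/ (1 - delta * r))).
  { apply is_series_geom. rewrite Rabs_pos_eq; nra. }
  assert (hb : is_series (fun n => delta ^ n - (delta * r) ^ n) (/ (1 - delta) - / (1 - delta * r)))
    by exact (is_series_minus _ _ _ _ hgeo1 hgeo2).
  assert (Hle : Series a <= / (1 - delta) - / (1 - delta * r)).
  { rewrite <- (is_series_unique _ _ hb). apply Series_le; [exact ha|eexists; exact hb]. }
  assert (Hge : 0 <= Series a).
  { apply Series_nonneg; [intros n; apply ha|].
    apply (ex_series_dom a delta hd). intros n. rewrite Rabs_pos_eq by apply ha.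
    pose proof (ha n). pose proof (pow01 (delta * r) n). nra. }
  unfold gfun. fold a. replace (1 - Series a - 1) with (- Series a) by ring.
  rewrite Rabs_Ropp, Rabs_pos_eq by lra.
  eapply Rle_trans; [exact Hle|].
  set (X := 1 - delta). set (Y := 1 - delta * r).
  assert (hX : 0 < X) by (unfold X; lra). assert (hXY : X <= Y) by (unfold X, Y; nra).
  replace (/ X - / Y) with ((Y - X) * / (X * Y)) by (field; lra).
  unfold Rdiv. replace (X ^ 2) with (X * X) by ring.
  apply Rmult_le_compat.
  - unfold X, Y; nra.
  - left; apply Rinv_0_lt_compat; nra.
  - unfold X, Y; nra.
  - apply Rinv_le_contravar; nra.
Qed.

Definition Bseq (r : R) (n : nat) : R := match n with O => 0 | S k => r ^ k * (1 - r) end.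

Lemma part2_core delta r x (M : nat) : 0 <= delta < 1 -> 0 < r < 1 -> x <= 1 ->
  (forall k, (k < M)%nat -> INR k * (1 - x) < x) ->
  Rabs (gfun delta r x - (1 - delta) / (1 - delta * r)) <=
    (delta / ((1 + delta) / 2)) ^ M * / (1 - (1 + delta) / 2).
Proof.
  intros hd hr hx hk.
  set (q := (1 + delta) / 2). set (t := delta / q).
  assert (hq : 0 < q < 1) by (unfold q; lra).
  assert (hdq : delta <= q) by (unfold q; lra).
  assert (ht : 0 <= t <= 1).
  { unfold t. split. apply Rdiv_le_0_compat; lra. apply Rmult_le_reg_r with q; [lra|].
    unfold Rdiv. rewrite Rmult_assoc, Rinv_l; lra. }
  assert (htq : t * q = delta) by (unfold t; field; lra).
  assert (hd' : 0 <= delta <= 1) by lra.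
  set (a := fun n => delta ^ n * probN r x n).
  set (b := fun n => delta ^ n * Bseq r n).
  assert (hr' : 0 <= r <= 1) by lra.
  assert (ha : forall n, 0 <= a n <= delta ^ n).
  { intros n; unfold a. pose proof (probN_nonneg r x n hr'). pose proof (probN_le1 r x n hr').
    pose proof (pow01 delta n hd'). nra. }
  assert (hb : forall n, 0 <= b n <= delta ^ n).
  { intros n; unfold b. assert (0 <= Bseq r n <= 1).
    { destruct n; simpl; [lra|]. pose proof (pow01 r n hr'). nra. }
    pose proof (pow01 delta n hd'). nra. }
  assert (hea : ex_series a).
  { apply (ex_series_dom a delta hd). intros n. rewrite Rabs_pos_eq; apply ha. }
  assert (heb : ex_series b).
  { apply (ex_series_dom b delta hd). intros n. rewrite Rabs_pos_eq; apply hb. }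
  assert (hab : forall n, Rabs (b n - a n) <= t ^ M * q ^ n).
  { intros n. destruct (Compare_dec.le_lt_dec M n) as [hn|hn].
    - apply Rle_trans with (delta ^ n).
      { pose proof (ha n); pose proof (hb n). apply Rabs_le; lra. }
      rewrite <- htq, Rpow_mult_distr. apply Rmult_le_compat_r.
      { pose proof (pow01 q n); lra. }
      apply pow_dec; auto.
    - assert (E : b n = a n).
      { unfold a, b. destruct n. { rewrite probN_0; simpl; ring. }
        rewrite probN_S; auto. apply hk. lia. }
      rewrite E, Rminus_diag, Rabs_R0. pose proof (pow01 q n); pose proof (pow01 t M ht); nra. }
  assert (hgq : is_series (fun n => q ^ n) (/ (1 - q))).
  { apply is_series_geom. rewrite Rabs_pos_eq; lra. }
  assert (hed : ex_series (fun n => t ^ M * q ^ n)).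
  { exact (ex_series_scal_l (t ^ M) (fun n => q ^ n) (ex_intro _ _ hgq)). }
  assert (heab : ex_series (fun n => Rabs (b n - a n))).
  { apply (@ex_series_le R_AbsRing R_CompleteNormedModule (fun n => Rabs (b n - a n)) (fun n => t ^ M * q ^ n)); [|exact hed].
    intros n. change (norm (Rabs (b n - a n))) with (Rabs (Rabs (b n - a n))).
    rewrite Rabs_Rabsolu. apply hab. }
  assert (Hb : Series b = delta * (1 - r) / (1 - delta * r)).
  { rewrite Series_incr_1 by exact heb.
    rewrite (Series_ext _ (fun k => delta * (1 - r) * (delta * r) ^ k)).
    2:{ intros k. unfold b, Bseq. simpl. rewrite Rpow_mult_distr. ring. }
    rewrite Series_scal_l, geom_val by nra. unfold b, Bseq. simpl. field. nra. }
  unfold gfun. fold a.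
  replace ((1 - delta) / (1 - delta * r)) with (1 - Series b) by (rewrite Hb; field; nra).
  replace (1 - Series a - (1 - Series b)) with (Series b - Series a) by ring.
  rewrite <- Series_minus by assumption.
  eapply Rle_trans. apply Series_Rabs. exact heab.
  eapply Rle_trans. apply Series_le; [|exact hed]. intros n; split; [apply Rabs_pos|apply hab].
  rewrite Series_scal_l, geom_val by lra. right; reflexivity.
Qed.

Lemma lt_helper a K p eps X2 : 0 < X2 -> 0 < K -> a <= K * p -> p < eps * X2 / K -> a / X2 < eps.
Proof.
  intros hX hK ha hp. assert (K * p < eps * X2).
  { apply Rmult_lt_reg_r with (/ K). apply Rinv_0_lt_compat; lra.
    replace (K * p * / K) with p by (field; lra). unfold Rdiv in hp. lra. }
  unfold Rdiv. apply Rmult_lt_reg_r with X2; [lra|].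
  rewrite Rmult_assoc, Rinv_l; lra.
Qed.

Theorem lemma2 (delta VP : R) (hdelta : 0 <= delta < 1) (hVP : 0 <= VP) :
  filterlim (fun p => gfun delta (rho1 p VP) (cpar p VP)) (at_right 0) (locally 1)
  /\
  filterlim (fun p => gfun delta (rho2 VP) (cpar p VP)) (at_right 0)
    (locally ((1 - delta) / (1 - delta * rho2 VP))).
Proof.
  set (K := 1 + exp VP).
  assert (hK : 0 < K) by (unfold K; pose proof (exp_pos VP); lra).
  destruct (rho2_bounds VP) as [h2 h2'].
  split.
  - apply filterlim_locally. intros eps.
    assert (hd1 : 0 < (1 - rho2 VP) / K) by (apply Rdiv_lt_0_compat; lra).
    assert (hd2 : 0 < eps * (1 - delta) ^ 2 / K).
    { apply Rdiv_lt_0_compat; [|lra]. apply Rmult_lt_0_compat; [apply cond_pos|]. nra. }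
    assert (hd : 0 < Rmin ((1 - rho2 VP) / K) (eps * (1 - delta) ^ 2 / K)) by (apply Rmin_glb_lt; auto).
    exists (mkposreal _ hd). intros p hb hp. change (Rabs (p - 0) < Rmin ((1 - rho2 VP) / K) (eps * (1 - delta) ^ 2 / K)) in hb.
    rewrite Rminus_0_r, Rabs_pos_eq in hb by lra.
    pose proof (Rmin_l ((1 - rho2 VP) / K) (eps * (1 - delta) ^ 2 / K)).
    pose proof (Rmin_r ((1 - rho2 VP) / K) (eps * (1 - delta) ^ 2 / K)).
    assert (hKp : K * p < 1 - rho2 VP).
    { apply Rmult_lt_reg_r with (/ K). apply Rinv_0_lt_compat; lra.
      rewrite (Rmult_comm K p), Rmult_assoc, Rinv_r, Rmult_1_r by lra. unfold Rdiv in *. lra. }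
    destruct (cpar_facts p VP 0 hp) as [hc [hu [_ hv]]].
    { simpl. rewrite Rmult_0_l, Ropp_0, exp_0, Rmult_1_r. exact hKp. }
    simpl in hv. rewrite Rmult_0_l in hv.
    assert (hc1 : cpar p VP <= 1). { rewrite hc. left. apply div_lt1; lra. }
    destruct (rho1_bounds p VP hp) as [[h1 h1'] hb1].
    change (Rabs (gfun delta (rho1 p VP) (cpar p VP) - 1) < eps).
    eapply Rle_lt_trans. apply part1_core; [auto|lra|auto].
    apply (lt_helper _ K p); [nra|auto|exact hb1|lra].
  - apply filterlim_locally. intros eps.
    set (q := (1 + delta) / 2). set (t := delta / q).
    assert (hq : 0 < q < 1) by (unfold q; lra).
    assert (ht : 0 <= t < 1).
    { unfold t. split. apply Rdiv_le_0_compat; lra. apply Rmult_lt_reg_r with q; [lra|].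
      unfold Rdiv. rewrite Rmult_assoc, Rinv_l; unfold q in *; lra. }
    assert (hy : 0 < eps * (1 - q) / 2) by (pose proof (cond_pos eps); apply Rdiv_lt_0_compat; nra).
    destruct (pow_lt_1_zero t ltac:(rewrite Rabs_pos_eq; lra) _ hy) as [M HM].
    specialize (HM M (Nat.le_refl M)). rewrite Rabs_pos_eq in HM by (apply pow_le; lra).
    set (T := (1 - rho2 VP) * exp (- (INR M * ln (/ rho2 VP)))).
    assert (hT : 0 < T) by (unfold T; pose proof (exp_pos (- (INR M * ln (/ rho2 VP)))); nra).
    assert (hd : 0 < T / K) by (apply Rdiv_lt_0_compat; lra).
    exists (mkposreal _ hd). intros p hb hp. change (Rabs (p - 0) < T / K) in hb.
    rewrite Rminus_0_r, Rabs_pos_eq in hb by lra.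
    assert (hKp : K * p < T).
    { apply Rmult_lt_reg_r with (/ K). apply Rinv_0_lt_compat; lra.
      rewrite (Rmult_comm K p), Rmult_assoc, Rinv_r, Rmult_1_r by lra. unfold Rdiv in *. lra. }
    destruct (cpar_facts p VP M hp hKp) as [hc [hu [huA hv]]].
    set (u := ln (rho1 p VP / rho2 VP)) in *.
    set (v := ln ((1 - rho2 VP) / (1 - rho1 p VP))) in *.
    set (A := ln (/ rho2 VP)) in *.
    assert (hMA : 0 <= INR M * A) by (pose proof (pos_INR M); nra).
    assert (hc1 : cpar p VP <= 1). { rewrite hc. left. apply div_lt1; lra. }
    change (Rabs (gfun delta (rho2 VP) (cpar p VP) - (1 - delta) / (1 - delta * rho2 VP)) < eps).
    eapply Rle_lt_trans. apply (part2_core delta (rho2 VP) (cpar p VP) M); auto.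
    + intros k hk. rewrite hc.
      assert (hkM : INR k <= INR M) by (apply le_INR; lia).
      assert (INR k * u < v) by (pose proof (pos_INR k); nra).
      replace (1 - v / (u + v)) with (u / (u + v)) by (field; lra).
      unfold Rdiv. rewrite <- Rmult_assoc. apply Rmult_lt_compat_r; [apply Rinv_0_lt_compat; lra| lra].
    + fold q. fold t. apply Rmult_lt_reg_r with (1 - q); [lra|].
      rewrite Rmult_assoc, Rinv_l by lra. pose proof (cond_pos eps). nra.
Qed.
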